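(* Let $k_1,k_2$ be nonnegative integers with $2k_1+k_2\ge 2$. Then for every integer $t$ with $1\le t\le k_1$ there exists a projective linear code $C$ over $\mathbb{Z}_4$ of type $4^{k_1}2^{k_2}$, length $n=2^{2k_1+k_2-1}-2^{2k_1+k_2-t-1}$ and minimum Lee distance $d_L=n$, having exactly two nonzero Lee weights $w_1=2^{2k_1+k_2-1}-2^{2k_1+k_2-t-1}$ and $w_2=2^{2k_1+k_2-1}$, with $A_{w_1}=2^{2k_1+k_2}-2^t$ and $A_{w_2}=2^t-1$.
   Context: A linear code of length $n$ over $\mathbb{Z}_4$ is a $\mathbb{Z}_4$-submodule of $\mathbb{Z}_4^n$; it has type $4^{k_1}2^{k_2}$ if it is isomorphic as a group to $\mathbb{Z}_4^{k_1}\times\mathbb{Z}_2^{k_2}$. The Lee weight on $\mathbb{Z}_4$ is $w_L(0)=0,w_L(1)=1,w_L(2)=2,w_L(3)=1$, extended additively to vectors; $d_L$ is the minimum Lee weight of a nonzero codeword. The dual $C^\perp$ is taken with respect to $\mathbf{x}\cdot\mathbf{y}=\sum x_iy_i\in\mathbb{Z}_4$, and $C$ is projective if $d_L(C^\perp)\ge3$. $A_w$ is the number of codewords of Lee weight $w$. *)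

(* Defs.v *)
From HB Require Import structures.
From mathcomp Require Import all_boot all_order all_algebra.
Set Implicit Arguments. Unset Strict Implicit. Unset Printing Implicit Defensive.
Import GRing.Theory.
Local Open Scope ring_scope.

Definition leeZ4 (x : 'Z_4) : nat :=
  match val x with 0 => 0 | 1 => 1 | 2 => 2 | _ => 1 end%N.

Definition lee_wt n (v : 'rV['Z_4]_n) : nat := (\sum_(i < n) leeZ4 (v ord0 i))%N.

Definition z4_linear n (C : {set 'rV['Z_4]_n}) : Prop :=
  0 \in C /\ (forall x y, x \in C -> y \in C -> x + y \in C) /\
  (forall (a : 'Z_4) x, x \in C -> a *: x \in C).

Definition z4_type n (C : {set 'rV['Z_4]_n}) (k1 k2 : nat) : Prop :=
  exists f : 'rV['Z_4]_k1 * 'rV['Z_2]_k2 -> 'rV['Z_4]_n,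
    [/\ injective f, (forall u v, f (u + v) = f u + f v)
      & forall c, c \in C <-> exists u, c = f u].

Definition z4_dual n (C : {set 'rV['Z_4]_n}) : {set 'rV['Z_4]_n} :=
  [set y : 'rV['Z_4]_n | [forall x in C, \sum_(i < n) x ord0 i * y ord0 i == 0]].

Definition z4_projective n (C : {set 'rV['Z_4]_n}) : Prop :=
  forall y, y \in z4_dual C -> y != 0 -> (3 <= lee_wt y)%N.

Definition min_lee_dist n (C : {set 'rV['Z_4]_n}) (d : nat) : Prop :=
  (exists2 c, c \in C & c != 0 /\ lee_wt c = d) /\
  (forall c, c \in C -> c != 0 -> (d <= lee_wt c)%N).

Definition lee_A n (C : {set 'rV['Z_4]_n}) (w : nat) : nat :=
  #|[set c in C | lee_wt c == w]|.

(* Main.v *)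
Require Import Defs.
From HB Require Import structures.
From mathcomp Require Import all_boot all_order all_algebra.
From mathcomp Require Import zify.
Import GRing.Theory.
Set Implicit Arguments. Unset Strict Implicit.
Local Open Scope ring_scope.

Definition lift2 (x : 'Z_2) : 'Z_4 := if x == 0 then 0 else 2.

Lemma lift2D (x y : 'Z_2) : lift2 (x + y) = lift2 x + lift2 y.
Proof. by case: x => [[|[|//]] ?]; case: y => [[|[|//]] ?]; apply/eqP. Qed.

Lemma leeN (x : 'Z_4) : leeZ4 (- x) = leeZ4 x.
Proof. by case: x => [[|[|[|[|//]]]] ?]. Qed.

Lemma lee2 (x : 'Z_4) : addn (leeZ4 (x + 2)) (leeZ4 x) = 2%N.
Proof. by case: x => [[|[|[|[|//]]]] ?]. Qed.

Lemma lee0 (x : 'Z_4) : (leeZ4 x == 0%N) = (x == 0).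
Proof. by case: x => [[|[|[|[|//]]]] ?]. Qed.

Lemma dbl2 (x : 'Z_4) : x != 0 -> (x == 2) || (x + x == 2).
Proof. by case: x => [[|[|[|[|//]]]] ?]. Qed.

Lemma oddmul (a b : 'Z_4) : a *+ 2 != 0 -> b != 0 -> a * b != 0.
Proof. by case: a => [[|[|[|[|//]]]] ?]; case: b => [[|[|[|[|//]]]] ?]. Qed.

Lemma oddN1 (x : 'Z_4) : x *+ 2 != 0 -> (- x == 1) = ~~ (x == 1).
Proof. by case: x => [[|[|[|[|//]]]] ?]. Qed.

Lemma two_odd (x : 'Z_4) : x * 2 == 0 -> (x == 0) || (x == 2).
Proof. by case: x => [[|[|[|[|//]]]] ?]. Qed.

Lemma lee1odd (x : 'Z_4) : leeZ4 x = 1%N -> x *+ 2 != 0.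
Proof. by case: x => [[|[|[|[|//]]]] ?]. Qed.

Lemma pair_comb (a b X Z : 'Z_4) : a *+ 2 != 0 -> b *+ 2 != 0 ->
  (if a == b then X + Z else X - Z) != 0 -> a * X + b * Z != 0.
Proof.
by case: a => [[|[|[|[|//]]]] ?]; case: b => [[|[|[|[|//]]]] ?];
   case: X => [[|[|[|[|//]]]] ?]; case: Z => [[|[|[|[|//]]]] ?].
Qed.


Lemma rowNz (R : nmodType) n (r : 'rV[R]_n) : r != 0 -> exists i, r ord0 i != 0.
Proof.
move=> H; apply/existsP; apply: contraR H => /existsPn H.
by apply/eqP/rowP => i; rewrite mxE; exact/eqP/negbNE/H.
Qed.

Lemma lift2_nz (x : 'Z_2) : x != 0 -> lift2 x != 0.
Proof. by rewrite /lift2 => /negPf ->. Qed.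

Section Code.
Variables k1 k2 : nat.
Local Notation V := ('rV['Z_4]_k1 * 'rV['Z_2]_k2)%type.

Definition bil (u v : V) : 'Z_4 :=
  \sum_(i < k1) u.1 ord0 i * v.1 ord0 i + \sum_(j < k2) lift2 (u.2 ord0 j * v.2 ord0 j).

Lemma bilC u v : bil u v = bil v u.
Proof. by rewrite /bil; congr (_ + _); apply: eq_bigr => i _; rewrite mulrC. Qed.

Lemma bilDl u u' v : bil (u + u') v = bil u v + bil u' v.
Proof.
rewrite /bil addrACA -!big_split /=; congr (_ + _); apply: eq_bigr => i _;
 by rewrite !mxE ?mulrDl ?lift2D.
Qed.

Lemma bil0l v : bil 0 v = 0.
Proof.
have h := bilDl 0 0 v; rewrite add0r in h.
by apply: (addrI (bil 0 v)); rewrite addr0 -h.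
Qed.

Lemma bilNl u v : bil (- u) v = - bil u v.
Proof. by apply: (addrI (bil u v)); rewrite -bilDl !subrr bil0l. Qed.

Lemma bilDr u v v' : bil u (v + v') = bil u v + bil u v'.
Proof. by rewrite !(bilC u) bilDl. Qed.

Lemma bilNr u v : bil u (- v) = - bil u v.
Proof. by rewrite !(bilC u) bilNl. Qed.

Lemma bil0r u : bil u 0 = 0.
Proof. by rewrite bilC bil0l. Qed.

Lemma bilMnl u v n : bil (u *+ n) v = bil u v *+ n.
Proof. by elim: n => [|n IH]; rewrite ?mulr0n ?bil0l // !mulrS bilDl IH. Qed.

Definition dv (i : 'I_k1) (a : 'Z_4) : V := (\row_l (if l == i then a else 0), 0).
Definition dw (j : 'I_k2) : V := (0, \row_l (if l == j then 1 else 0)).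

Lemma bil_dv u i a : bil u (dv i a) = u.1 ord0 i * a.
Proof.
rewrite /bil /= (bigD1 i) //= !mxE eqxx big1 ?addr0 ?big1 ?addr0 //.
  by move=> j _; rewrite !mxE mulr0.
by move=> j /negPf ji; rewrite !mxE ji mulr0.
Qed.

Lemma bil_dw u j : bil u (dw j) = lift2 (u.2 ord0 j).
Proof.
rewrite /bil /= big1 ?add0r; last by move=> i _; rewrite !mxE mulr0.
rewrite (bigD1 j) //= !mxE eqxx mulr1 big1 ?addr0 //.
by move=> l /negPf lj; rewrite !mxE lj mulr0.
Qed.

Lemma nondeg u : u != 0 -> exists v, bil u v != 0.
Proof.
case: u => u1 u2 Hu.
have [E1|N1] := eqVneq u1 0.
  have N2 : u2 != 0 by apply: contraNneq Hu => E2; rewrite E1 E2.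
  have [j Hj] := rowNz N2.
  by exists (dw j); rewrite bil_dw lift2_nz.
have [i Hi] := rowNz N1.
by exists (dv i 1); rewrite bil_dv mulr1.
Qed.

Lemma get2 u (P : {pred V}) v : (forall x y, x \in P -> y \in P -> x + y \in P) ->
  v \in P -> bil u v != 0 -> exists2 v0, v0 \in P & bil u v0 = 2.
Proof.
move=> addP Pv /dbl2 /orP [/eqP h|/eqP h]; first by exists v.
by exists (v + v); [exact: addP | rewrite bilDr].
Qed.

Lemma sum_sub u v0 (P : {pred V}) :
  (forall x y, x \in P -> y \in P -> x + y \in P) ->
  (forall x, x \in P -> - x \in P) -> v0 \in P -> bil u v0 = 2 ->
  (\sum_(v in P) leeZ4 (bil u v))%N = #|P|.
Proof.
move=> addP oppP Pv0 h2.
have E : (\sum_(v in P) leeZ4 (bil u v) = \sum_(v in P) leeZ4 ((bil u v + 2)%R))%N.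
  rewrite (reindex_inj (addIr v0)) /=; apply: eq_big => [v|v _]; last by rewrite bilDr h2.
  apply/idP/idP => h; last exact: addP.
  by have := addP _ _ h (oppP _ Pv0); rewrite addrK.
have : (\sum_(v in P) leeZ4 (bil u v) + \sum_(v in P) leeZ4 (bil u v) = #|P| * 2)%N.
  by rewrite {1}E -big_split /= -sum_nat_const; apply: eq_bigr => v _; rewrite lee2.
lia.
Qed.

Lemma sum_all u : u != 0 -> (\sum_v leeZ4 (bil u v))%N = #|{: V}|.
Proof.
move=> /nondeg [v hv].
have [v0 _ h2] := @get2 u predT v (fun _ _ _ _ => isT) isT hv.
have := @sum_sub u v0 predT (fun _ _ _ _ => isT) (fun _ _ => isT) isT h2.
move=> <-; apply: eq_bigl => x; by [].
Qed.

End Code.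


Section Code2.
Variables k1 k2 t : nat.
Hypothesis ht2 : (t <= k1)%N.
Local Notation V := ('rV['Z_4]_k1 * 'rV['Z_2]_k2)%type.
Local Notation bil := (@bil k1 k2).

Definition Hb (v : V) : bool :=
  [forall i : 'I_k1, (i < t)%N ==> (v.1 ord0 i *+ 2 == 0)].
Definition Hp : {pred V} := [pred v : V | Hb v].

Lemma Hp_add x y : x \in Hp -> y \in Hp -> x + y \in Hp.
Proof.
move=> /forallP hx /forallP hy; apply/forallP => i; apply/implyP => it.
by rewrite /= mxE mulrnDl (eqP (implyP (hx i) it)) (eqP (implyP (hy i) it)) addr0.
Qed.

Lemma Hp_opp x : (- x \in Hp) = (x \in Hp).
Proof.
rewrite !inE; apply: eq_forallb => i; by rewrite /= mxE mulNrn oppr_eq0.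
Qed.

Lemma Hp0 : (0 : V) \in Hp.
Proof. by apply/forallP => i; apply/implyP => _; rewrite /= mxE mul0rn. Qed.

Definition rep (v : V) : bool :=
  if [pick i : 'I_k1 | (i < t)%N && (v.1 ord0 i *+ 2 != 0)] is Some i
  then v.1 ord0 i == 1 else false.

Definition Rp : {pred V} := [pred v : V | ~~ Hb v && rep v].

Lemma rep_opp v : v \notin Hp -> rep (- v) = ~~ rep v.
Proof.
move=> nH; rewrite /rep.
have -> : [pick i : 'I_k1 | (i < t)%N && ((- v).1 ord0 i *+ 2 != 0)] =
          [pick i : 'I_k1 | (i < t)%N && (v.1 ord0 i *+ 2 != 0)].
  by apply: eq_pick => i /=; rewrite mxE mulNrn oppr_eq0.
case: pickP => [i /andP [_ hi]|none]; first by rewrite /= mxE oddN1.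
exfalso; move/forallPn: nH => [i]; rewrite negb_imply => /andP [it hi].
by have := none i; rewrite it hi.
Qed.

Definition W (u : V) : nat := (\sum_(v in Rp) leeZ4 (bil u v))%N.

Lemma halveF (F : V -> nat) : (forall v, F (- v) = F v) ->
  (\sum_(v in [predC Hp]) F v = 2 * \sum_(v in Rp) F v)%N.
Proof.
move=> FN.
rewrite (bigID rep) /= mul2n -addnn addnC; congr (_ + _).
rewrite (reindex_inj (@oppr_inj V)) /=; apply: eq_big => [v|v _].
  have h1 := Hp_opp v; have h2 := @rep_opp v.
  rewrite !inE in h1 h2 *; rewrite h1; case: (Hb v) h2 => //= h2.
  by rewrite h2 // negbK.
by rewrite FN.
Qed.

Lemma halve u : (\sum_(v in [predC Hp]) leeZ4 (bil u v) = 2 * W u)%N.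
Proof. by apply: halveF => v; rewrite bilNr leeN. Qed.

Definition Tset : {set V} := [set u : V | [forall v in Hp, bil u v == 0]].

Lemma Tset0 : (0 : V) \in Tset.
Proof. by rewrite inE; apply/forall_inP => v _; rewrite bil0l. Qed.

Lemma sumH u : (\sum_(v in Hp) leeZ4 (bil u v) = if u \in Tset then 0 else #|Hp|)%N.
Proof.
case: ifP => hT.
  rewrite big1 // => v hv; move: hT; rewrite inE => /forall_inP /(_ v hv) /eqP ->.
  by [].
move: hT; rewrite inE => /forall_inP; case/boolP: [forall v in Hp, bil u v == 0].
  by move/forall_inP.
move=> /forall_inPn [v hv nz] _.
have [v0 hv0 h2] := get2 Hp_add hv nz.
apply: sum_sub h2 => //; [exact: Hp_add | by move=> x; rewrite Hp_opp].
Qed.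

Lemma W_formula u : (2 * W u = if u == 0%R then 0 else
    if u \in Tset then #|{: V}| else #|{: V}| - #|Hp|)%N.
Proof.
rewrite -halve.
have Eall : (\sum_v leeZ4 (bil u v) = \sum_(v in Hp) leeZ4 (bil u v) +
               \sum_(v in [predC Hp]) leeZ4 (bil u v))%N.
  by rewrite (bigID (mem Hp)) /=; congr (_ + _); apply: eq_bigl => v; rewrite !inE.
case: eqP => [->|/eqP nz].
  by rewrite big1 // => v _; rewrite bil0l.
move: Eall; rewrite sum_all // sumH.
case: ifP => _; lia.
Qed.

End Code2.


Section Code3.
Variables k1 k2 t : nat.
Hypothesis ht2 : (t <= k1)%N.
Local Notation V := ('rV['Z_4]_k1 * 'rV['Z_2]_k2)%type.
Local Notation bil := (@bil k1 k2).
Local Notation Hp := (@Hp k1 k2 t).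
Local Notation Tset := (@Tset k1 k2 t).

Lemma card_HT : (#|Hp| * #|Tset| = #|{: V}|)%N.
Proof.
have E1 : (\sum_u \sum_(v in Hp) leeZ4 (bil u v) = #|[predC Tset]| * #|Hp|)%N.
  under eq_bigr do rewrite sumH.
  rewrite (bigID (mem Tset)) /= big1 ?add0n; last by move=> u ->.
  rewrite -sum_nat_const; apply: eq_big => [u|u]; first by rewrite !inE.
  by move=> /negPf ->.
have E2 : (\sum_u \sum_(v in Hp) leeZ4 (bil u v) = #|[predD1 Hp & 0%R]| * #|{: V}|)%N.
  rewrite exchange_big /= (bigD1 (0 : V)) /= ?Hp0 // big1 ?add0n; last first.
    by move=> u _; rewrite bil0r.
  rewrite -sum_nat_const; apply: eq_big => [v|v]; first by rewrite !inE andbC.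
  move=> /andP [_ nz]; rewrite -(sum_all nz); apply: eq_bigr => u _.
  by rewrite bilC.
have C1 : (#|Tset| + #|[predC Tset]|)%N = #|{: V}| by exact: cardC.
have C2 := cardD1 (0 : V) Hp; rewrite Hp0 in C2.
rewrite E1 in E2.
move: C1 C2 E2.
set a := #|Tset|; set b := #|[predC Tset]|; set c := #|Hp|; set d := #|[predD1 Hp & 0]|.
set e := #|{: V}|.
move=> C1 C2 E2; rewrite -C1 in E2 *; rewrite C2 in E2 *; nia.
Qed.

Lemma widen_inj : injective (widen_ord ht2).
Proof. by move=> a b /(congr1 val) /= E; apply: val_inj. Qed.

Definition emb (A : {set 'I_t}) : V :=
  (\row_(i < k1) (if i \in [set widen_ord ht2 j | j in A] then 2 else 0), 0).

Lemma emb_inj : injective emb.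
Proof.
move=> A B /(congr1 (fun v => v.1)) /rowP E; apply/setP => j.
have := E (widen_ord ht2 j); rewrite !mxE !(mem_imset _ _ widen_inj).
by case: (j \in A); case: (j \in B).
Qed.

Lemma dw_Hp j : dw k1 j \in Hp.
Proof. by rewrite inE; apply/forallP => i; rewrite /= mxE mul0rn eqxx implybT. Qed.

Lemma dv_Hp (i : 'I_k1) a : ((t <= i)%N || (a *+ 2 == 0)) -> dv k2 i a \in Hp.
Proof.
move=> h; rewrite inE; apply/forallP => i'; apply/implyP => it; rewrite /= mxE.
case: (eqVneq i' i) => [E|_]; last by rewrite mul0rn.
by move: h; rewrite -E leqNgt it.
Qed.

Lemma Tset_emb : Tset = [set emb A | A in powerset [set: 'I_t]].
Proof.
apply/setP => u; apply/idP/imsetP.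
  rewrite inE => /forall_inP H.
  case: u H => u1 u2 H.
  have h2 : u2 = 0.
    apply/rowP => j; have := H _ (dw_Hp j); rewrite bil_dw mxE.
    by apply: contraTeq => /lift2_nz.
  have h1 : forall i : 'I_k1, (t <= i)%N -> u1 ord0 i = 0.
    move=> i ti; have := H _ (@dv_Hp i 1 _); rewrite ti => /(_ isT).
    by rewrite bil_dv mulr1 => /eqP.
  have h3 : forall i : 'I_k1, (i < t)%N -> (u1 ord0 i == 0) || (u1 ord0 i == 2).
    move=> i it; apply: two_odd; have := H _ (@dv_Hp i 2 _).
    by rewrite orbT bil_dv => /(_ isT).
  exists [set j : 'I_t | u1 ord0 (widen_ord ht2 j) != 0].
    by rewrite powersetT inE.
  rewrite /emb h2; congr (_, _); apply/rowP => i; rewrite mxE.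
  case: (ltnP i t) => it.
    move: (h3 _ it).
    have -> : i = widen_ord ht2 (Ordinal it) by apply: val_inj.
    rewrite (mem_imset _ _ widen_inj) inE.
    by case/orP => /eqP ->.
  rewrite h1 //; case: ifP => // /imsetP [j _ E].
  by move: it; rewrite E /= leqNgt ltn_ord.
move=> [A _ ->]; rewrite inE; apply/forall_inP => v; rewrite inE => /forallP hv.
rewrite /bil /= big1 ?add0r; last first.
  move=> i _; rewrite mxE; case: ifP => [/imsetP [j _ E]|_]; last by rewrite mul0r.
  move: (hv i); rewrite E /= ltn_ord /= => /eqP.
  by rewrite mulr_natl.
by rewrite big1 // => j _; rewrite mxE mul0r.
Qed.

Lemma card_T : #|Tset| = (2 ^ t)%N.
Proof.
by rewrite Tset_emb card_imset; [rewrite card_powerset cardsT card_ord | exact: emb_inj].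
Qed.

End Code3.


Lemma sumcast n m (e : n = m) (G : 'I_n -> nat) :
  (\sum_(j < m) G (cast_ord (esym e) j) = \sum_(i < n) G i)%N.
Proof. by case: m / e; apply: eq_bigr => j _; rewrite cast_ord_id. Qed.

Section Final.
Variables k1 k2 t : nat.
Hypothesis ht1 : (1 <= t)%N.
Hypothesis ht2 : (t <= k1)%N.
Local Notation V := ('rV['Z_4]_k1 * 'rV['Z_2]_k2)%type.
Local Notation bil := (@bil k1 k2).
Local Notation Hp := (@Hp k1 k2 t).
Local Notation Rp := (@Rp k1 k2 t).
Local Notation Tset := (@Tset k1 k2 t).
Local Notation W := (@W k1 k2 t).

Local Notation m := (2 * k1 + k2)%N.
Local Notation w1 := (2 ^ (m - 1) - 2 ^ (m - t - 1))%N.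
Local Notation w2 := (2 ^ (m - 1))%N.

Lemma cardV : #|{: V}| = (2 ^ m)%N.
Proof.
rewrite card_prod !card_mx !card_ord /= !mul1n.
by rewrite expnD expnM.
Qed.

Lemma cardHp : #|Hp| = (2 ^ (m - t))%N.
Proof.
have h := card_HT k2 ht2; rewrite (card_T k2 ht2) cardV in h.
have tm : (t <= m)%N by lia.
apply/eqP; rewrite -(@eqn_pmul2r (2 ^ t)) ?expn_gt0 // h -expnD subnK //.
Qed.

Lemma cardRp : #|Rp| = w1.
Proof.
have h := @halveF k1 k2 t (fun _ => 1%N) (fun _ => erefl).
rewrite !sum1_card in h.
have C := cardC (mem Hp).
rewrite cardV cardHp in C.
set p := (m - t - 1)%N.
have e1 : (m - t = p + 1)%N by lia.
have e2 : (m - 1 = p + t)%N by lia.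
have e3 : (m = p + t + 1)%N by lia.
move: C h; rewrite e1 e2 e3 !expnD.
have : (0 < 2 ^ t)%N by rewrite expn_gt0.
set a := (2 ^ p)%N; set b := (2 ^ t)%N.
rewrite expn1; move=> hb C h; rewrite h in C; move: C; set r := #|Rp|; set ab := (a * b)%N; lia.
Qed.

Lemma Wval u : u != 0 -> W u = if u \in Tset then w2 else w1.
Proof.
move=> nz; have h := W_formula ht2 u.
rewrite (negPf nz) cardV cardHp in h.
set p := (m - t - 1)%N.
have e1 : (m - t = p + 1)%N by lia.
have e2 : (m - 1 = p + t)%N by lia.
have e3 : (m = p + t + 1)%N by lia.
move: h; rewrite e1 e2 e3 !expnD expn1.
have : (0 < 2 ^ t)%N by rewrite expn_gt0.
have : (0 < 2 ^ p)%N by rewrite expn_gt0.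
set a := (2 ^ p)%N; set b := (2 ^ t)%N.
case: (u \in Tset) => /=; nia.
Qed.

Lemma W0 : W 0 = 0%N.
Proof. by rewrite /W big1 // => v _; rewrite bil0l. Qed.

Lemma w_facts : [/\ (0 < w1)%N, (w1 < w2)%N & (0 < w2)%N].
Proof.
set p := (m - t - 1)%N.
have e2 : (m - 1 = p + t)%N by lia.
rewrite e2 expnD.
have : (1 < 2 ^ t)%N by rewrite -{1}(expn0 2) ltn_exp2l.
have : (0 < 2 ^ p)%N by rewrite expn_gt0.
set a := (2 ^ p)%N; set b := (2 ^ t)%N.
move=> ha hb; split; nia.
Qed.

Variable N : nat.
Hypothesis hN : #|Rp| = N.

Definition col (j : 'I_N) : V := enum_val (cast_ord (esym hN) j).

Lemma col_inj : injective col.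
Proof. by move=> a b /enum_val_inj /cast_ord_inj. Qed.

Lemma colR j : col j \in Rp.
Proof. exact: enum_valP. Qed.

Definition fC (u : V) : 'rV['Z_4]_N := \row_j bil u (col j).

Lemma fC_add u v : fC (u + v) = fC u + fC v.
Proof. by apply/rowP => j; rewrite !mxE bilDl. Qed.

Lemma fC0 : fC 0 = 0.
Proof. by apply/rowP => j; rewrite !mxE bil0l. Qed.

Lemma fC_sub u v : fC (u - v) = fC u - fC v.
Proof. by apply/rowP => j; rewrite !mxE bilDl bilNl. Qed.

Lemma wt_fC u : lee_wt (fC u) = W u.
Proof.
rewrite /W big_enum_val /lee_wt.
rewrite -(sumcast hN (fun i => leeZ4 (bil u (enum_val i)))).
by apply: eq_bigr => j _; rewrite mxE.
Qed.

Lemma W_eq0 u : (W u == 0%N) = (u == 0).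
Proof.
case: (eqVneq u 0) => [->|nz]; first by rewrite W0.
case: w_facts => h1 h2 h3.
by rewrite Wval //; case: (u \in Tset); apply/negbTE; rewrite -lt0n.
Qed.

Lemma fC_inj : injective fC.
Proof.
move=> u v E; apply/eqP; rewrite -subr_eq0 -W_eq0 -wt_fC fC_sub E subrr.
by apply/eqP; rewrite /lee_wt big1 // => j _; rewrite mxE.
Qed.

Definition Cset : {set 'rV['Z_4]_N} := fC @: setT.

Lemma cardA w : lee_A Cset w = #|[set u | W u == w]|.
Proof.
rewrite /lee_A.
have -> : [set c in Cset | lee_wt c == w] = fC @: [set u | W u == w].
  apply/setP => c; rewrite inE; apply/andP/imsetP.
    by move=> [/imsetP [u _ ->] hw]; exists u => //; rewrite inE -wt_fC.
  by move=> [u hu ->]; split; [exact: imset_f | rewrite wt_fC; rewrite inE in hu].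
exact: card_imset fC_inj.
Qed.

Lemma inC u : fC u \in Cset.
Proof. exact: imset_f. Qed.

Lemma C_lin : z4_linear Cset.
Proof.
split; first by rewrite -fC0 inC.
split; first by move=> x y /imsetP [u _ ->] /imsetP [v _ ->]; rewrite -fC_add inC.
move=> a x /imsetP [u _ ->].
have -> : a *: fC u = fC (u *+ a).
  by apply/rowP => j; rewrite !mxE bilMnl -mulr_natl natr_Zp.
exact: inC.
Qed.

Lemma C_type : z4_type Cset k1 k2.
Proof.
exists fC; split; [exact: fC_inj | exact: fC_add |].
by move=> c; split => [/imsetP [u _ ->]| [u ->]]; [exists u | exact: inC].
Qed.

Lemma fC_nz u : fC u != 0 -> u != 0.
Proof. by apply: contraNneq => ->; rewrite fC0. Qed.

Lemma C_weights c : c \in Cset -> c != 0 -> lee_wt c = w1 \/ lee_wt c = w2.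
Proof.
move=> /imsetP [u _ ->] /fC_nz nz.
by rewrite wt_fC Wval //; case: (u \in Tset); auto.
Qed.

Lemma A1 : lee_A Cset w1 = (2 ^ m - 2 ^ t)%N.
Proof.
case: w_facts => h1 h2 h3.
rewrite cardA.
have -> : [set u | W u == w1] = ~: Tset.
  apply/setP => u; rewrite in_setC [LHS]inE.
  case: (eqVneq u 0) => [->|nz].
    by rewrite W0 Tset0 /= eq_sym; apply/negbTE; rewrite -lt0n.
  rewrite Wval //; case: (u \in Tset) => /=; last by rewrite eqxx.
  by rewrite gtn_eqF.
have := cardsC Tset; rewrite (card_T k2 ht2) cardV.
by move=> <-; rewrite addKn.
Qed.

Lemma A2 : lee_A Cset w2 = (2 ^ t - 1)%N.
Proof.
case: w_facts => h1 h2 h3.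
rewrite cardA.
have -> : [set u | W u == w2] = Tset :\ (0 : V).
  apply/setP => u; rewrite in_setD1 [LHS]inE.
  case: (eqVneq u 0) => [->|nz].
    by rewrite W0 /= eq_sym; apply/negbTE; rewrite -lt0n.
  rewrite Wval //; case: (u \in Tset) => /=; first by rewrite eqxx.
  by rewrite ltn_eqF.
have := cardsD1 (0 : V) Tset; rewrite (card_T k2 ht2) Tset0.
by move=> ->; rewrite add1n subn1.
Qed.

Lemma min_dist : min_lee_dist Cset w1.
Proof.
case: w_facts => h1 h2 h3.
split.
  have : (0 < #|~: Tset|)%N.
    have := cardsC Tset; rewrite (card_T k2 ht2) cardV.
    have : (2 ^ t < 2 ^ m)%N by rewrite ltn_exp2l //; lia.
    lia.
  case/card_gt0P => u; rewrite in_setC => hu.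
  have nz : u != 0 by apply: contraNneq hu => ->; rewrite Tset0.
  have Wu : W u = w1 by rewrite Wval // (negPf hu).
  exists (fC u); first exact: inC.
  split; last by rewrite wt_fC.
  apply/eqP => E; move: Wu; rewrite -wt_fC E.
  rewrite /lee_wt big1 => [E1|j _]; last by rewrite mxE.
  by move: h1; rewrite -E1.
move=> c hc nz; case: (C_weights hc nz) => ->; first by [].
exact: ltnW.
Qed.

Lemma proj : z4_projective Cset.
Proof.
move=> y; rewrite inE => /forall_inP hy ynz.
have hyu : forall u, \sum_(i < N) bil u (col i) * y ord0 i = 0.
  move=> u; transitivity (\sum_(i < N) fC u ord0 i * y ord0 i).
    by apply: eq_bigr => i _; rewrite mxE.
  exact/eqP/hy/inC.
rewrite leqNgt; apply/negP.
have [j yj] := rowNz ynz.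
have Lj : (0 < leeZ4 (y ord0 j))%N by rewrite lt0n lee0.
have cjR := colR j.
rewrite /lee_wt (bigD1 j) //=.
case: (pickP (fun k : 'I_N => (k != j) && (y ord0 k != 0))) => [k /andP [kj yk] | none].
  rewrite (bigD1 k) //= => hle.
  have Lk : (0 < leeZ4 (y ord0 k))%N by rewrite lt0n lee0.
  move: hle Lj Lk; set a := leeZ4 _; set b := leeZ4 _; set c := bigop _ _ _; move=> hle Lj Lk.
  have ej : a = 1%N by lia.
  have ek : b = 1%N by lia.
  have hrest : (c == 0)%N by lia.
  have rest0 : forall i, i != j -> i != k -> y ord0 i = 0.
    move=> i ij ik; move: hrest; rewrite /c sum_nat_eq0 => /forallP /(_ i).
    by rewrite ij ik /= lee0 => /eqP.
  have cneq : col j != col k.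
    by apply/eqP => /col_inj E; rewrite E eqxx in kj.
  have ckR := colR k.
  have cneqN : col j != - col k.
    apply/eqP => E; move: cjR ckR; rewrite !inE E => /andP [_ r1] /andP [nH r2].
    by rewrite rep_opp ?inE // r2 in r1.
  pose w := if y ord0 j == y ord0 k then col j + col k else col j - col k.
  have wnz : w != 0.
    by rewrite /w; case: ifP => _; [rewrite addr_eq0 | rewrite subr_eq0].
  have [u hu] := nondeg wnz.
  have := hyu u.
  rewrite (bigD1 j) //= (bigD1 k) //= big1 ?addr0; last first.
    by move=> i /andP [ij ik]; rewrite rest0 // mulr0.
  move/eqP; apply/negP; rewrite !(mulrC (bil u _)).
  apply: pair_comb; [exact: lee1odd | exact: lee1odd |].
  move: hu; rewrite bilC /w; case: (y ord0 j == y ord0 k).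
    by rewrite bilDr.
  by rewrite bilDr bilNr.
move=> _.
have rest0 : forall i, i != j -> y ord0 i = 0.
  by move=> i ij; move: (none i); rewrite ij /= => /negbFE /eqP.
move: cjR; rewrite inE => /andP [nH _].
move: nH => /forallPn [i0]; rewrite negb_imply => /andP [i0t hodd].
have := hyu (dv k2 i0 1).
rewrite (bigD1 j) //= big1 ?addr0; last first.
  by move=> i ij; rewrite rest0 // mulr0.
rewrite bilC bil_dv mulr1.
move/eqP; apply/negP; exact: oddmul.
Qed.

End Final.


Unset Implicit Arguments.

Theorem theorem5p7 (k1 k2 : nat) (hk : (2 <= 2 * k1 + k2)%N)
  (t : nat) (ht1 : (1 <= t)%N) (ht2 : (t <= k1)%N) :
  exists C : {set 'rV['Z_4]_(2 ^ (2 * k1 + k2 - 1) - 2 ^ (2 * k1 + k2 - t - 1))},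
    [/\ z4_linear C, z4_projective C, z4_type C k1 k2 &
      [/\         min_lee_dist C (2 ^ (2 * k1 + k2 - 1) - 2 ^ (2 * k1 + k2 - t - 1)),
        (forall c, c \in C -> c != 0 ->
           lee_wt c = (2 ^ (2 * k1 + k2 - 1) - 2 ^ (2 * k1 + k2 - t - 1))%N \/
           lee_wt c = (2 ^ (2 * k1 + k2 - 1))%N),
        lee_A C (2 ^ (2 * k1 + k2 - 1) - 2 ^ (2 * k1 + k2 - t - 1))
          = (2 ^ (2 * k1 + k2) - 2 ^ t)%N
      & lee_A C (2 ^ (2 * k1 + k2 - 1)) = (2 ^ t - 1)%N]].
Proof.
have hN := @cardRp k1 k2 t ht1 ht2.
exists (Cset hN).
split; [exact: C_lin | exact: proj | exact: C_type | split].
- exact: min_dist.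
- exact: C_weights.
- exact: A1.
- exact: A2.
Qed.
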